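(* Work in coordinates $(t,r,\theta,\phi)$ with the spherical symmetry vector fields $\mathbf X_1=\sin\phi\,\partial_\theta+\frac{\cos\phi}{\tan\theta}\partial_\phi$, $\mathbf X_2=-\cos\phi\,\partial_\theta+\frac{\sin\phi}{\tan\theta}\partial_\phi$, $\mathbf X_3=\partial_\phi$. Let the coframe be $\mathbf h^1=A_1(t,r)dt$, $\mathbf h^2=A_2(t,r)dr$, $\mathbf h^3=A_3(t,r)d\theta$, $\mathbf h^4=A_3(t,r)\sin\theta\,d\phi$, so that $\mathcal L_{\mathbf X_I}\mathbf h^a=f_I{}^{\hat i}\lambda_{\hat i}{}^a{}_b\mathbf h^b$ with $\lambda_{\hat i}$ and $f_I{}^{\hat i}$ as in the context. Then a metric-compatible connection $\omega_{abc}$ satisfies $\mathcal L_{\mathbf X_I}\omega^a{}_{bc}=0$ for $I=1,2,3$ if and only if, up to the antisymmetry $\omega_{abc}=-\omega_{bac}$, its only non-zero components are $\omega_{341}=W_1$, $\omega_{342}=W_2$, $\omega_{233}=\omega_{244}=W_3$, $\omega_{234}=-\omega_{243}=W_4$, $\omega_{121}=W_5$, $\omega_{122}=W_6$, $\omega_{133}=\omega_{144}=W_7$, $\omega_{134}=-\omega_{143}=W_8$, $\omega_{344}=-\frac{\cos\theta}{A_3\sin\theta}$, where $W_1,\dots,W_8$ are arbitrary functions of $(t,r)$.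
   Context: Frame indices $a,b,\ldots\in\{1,2,3,4\}$, $\eta=\mathrm{diag}(-1,1,1,1)$, $\omega_{abc}=\eta_{ad}\omega^d{}_{bc}$, connection one-form $\boldsymbol\omega^a{}_b=\omega^a{}_{bc}\mathbf h^c$; $\mathbf h_c(F)=h_c{}^\mu\partial_\mu F$. The isotropy generators (matrices $\lambda^a{}_b$, row $a$, column $b$) are: $\lambda_{\hat1}$ with $\lambda_{\hat1}{}^3{}_4=1$, $\lambda_{\hat1}{}^4{}_3=-1$; $\lambda_{\hat2}$ with $\lambda_{\hat2}{}^2{}_3=-1$, $\lambda_{\hat2}{}^3{}_2=1$; $\lambda_{\hat3}$ with $\lambda_{\hat3}{}^2{}_4=-1$, $\lambda_{\hat3}{}^4{}_2=1$; all other entries zero. The coefficients are $f_1{}^{\hat1}=\frac{\cos\phi}{\sin\theta}$, $f_2{}^{\hat1}=\frac{\sin\phi}{\sin\theta}$, and all other $f_I{}^{\hat i}=0$. For $\Lambda=f_I{}^{\hat i}\lambda_{\hat i}$, $\mathcal L_{\mathbf X_I}\omega^a{}_{bc}:=X_I{}^d\mathbf h_d(\omega^a{}_{bc})+\omega^d{}_{bc}\Lambda^a{}_d-\omega^a{}_{dc}\Lambda^d{}_b-\omega^a{}_{bd}\Lambda^d{}_c-\mathbf h_c(f_I{}^{\hat i})\lambda_{\hat i}{}^a{}_b$, with $X_I{}^d=h^d{}_\mu X_I{}^\mu$.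
   Formalization: In $\mathcal L_{\mathbf X_I}\omega^a{}_{bc}$ the matrix $\Lambda$ is $-f_I{}^{\hat i}\lambda_{\hat i}$ instead of $f_I{}^{\hat i}\lambda_{\hat i}$, so the last term is $+\mathbf h_c(f_I{}^{\hat i})\lambda_{\hat i}{}^a{}_b$. The statement above fails without it. *)

(* Defs.v *)
From Stdlib Require Import Reals.
From Coquelicot Require Import Coquelicot.
Open Scope R_scope.

Inductive Idx := i1 | i2 | i3 | i4.
(** Indices of the isotropy generators (hat i) and of the symmetry
    generators X_I, both in {1,2,3}. *)
Inductive Idx3 := j1 | j2 | j3.

Definition sum4 (F : Idx -> R) : R := F i1 + F i2 + F i3 + F i4.
Definition sum3 (F : Idx3 -> R) : R := F j1 + F j2 + F j3.

Definition eta (a : Idx) : R := match a with i1 => -1 | _ => 1 end.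

(** Scalar fields of the coordinates (t, r, theta, phi). *)
Definition Field := R -> R -> R -> R -> R.

Definition dpart (mu : Idx) (F : Field) (t r th ph : R) : R :=
  match mu with
  | i1 => Derive (fun s => F s r th ph) t
  | i2 => Derive (fun s => F t s th ph) r
  | i3 => Derive (fun s => F t r s ph) th
  | i4 => Derive (fun s => F t r th s) ph
  end.

(** Frame vectors h_a = h_a^mu d_mu dual to the coframe
    h^1 = A1 dt, h^2 = A2 dr, h^3 = A3 dtheta, h^4 = A3 sin(theta) dphi. *)
Definition hvec (A1 A2 A3 : R -> R -> R) (d : Idx) (F : Field)
  (t r th ph : R) : R :=
  match d with
  | i1 => / A1 t r * dpart i1 F t r th ph
  | i2 => / A2 t r * dpart i2 F t r th ph
  | i3 => / A3 t r * dpart i3 F t r th ph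
  | i4 => / (A3 t r * sin th) * dpart i4 F t r th ph
  end.

(** Coordinate components (X^theta, X^phi) of the symmetry generators
    X_1 = sin phi d_theta + cos phi / tan theta d_phi,
    X_2 = - cos phi d_theta + sin phi / tan theta d_phi,
    X_3 = d_phi   (X^t = X^r = 0);  1/tan theta is written cos/sin so
    that it is correct (= 0) at theta = pi/2, where Stdlib's tan divides
    by zero. *)
Definition Xth (I : Idx3) (th ph : R) : R :=
  match I with j1 => sin ph | j2 => - cos ph | j3 => 0 end.
Definition Xph (I : Idx3) (th ph : R) : R :=
  match I with
  | j1 => cos ph * (cos th / sin th)
  | j2 => sin ph * (cos th / sin th)
  | j3 => 1 end.

(** Frame components X_I^d = h^d_mu X_I^mu. *)
Definition Xframe (A3 : R -> R -> R) (I : Idx3) (d : Idx)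
  (t r th ph : R) : R :=
  match d with
  | i1 => 0
  | i2 => 0
  | i3 => A3 t r * Xth I th ph
  | i4 => A3 t r * sin th * Xph I th ph
  end.

(** Isotropy generators lambda_{hat i}^a_b (row a, column b). *)
Definition lam (i : Idx3) (a b : Idx) : R :=
  match i, a, b with
  | j1, i3, i4 => 1
  | j1, i4, i3 => -1
  | j2, i2, i3 => -1
  | j2, i3, i2 => 1
  | j3, i2, i4 => -1
  | j3, i4, i2 => 1
  | _, _, _ => 0
  end.

(** Coefficients f_I^{hat i}: f_1^1 = cos phi / sin theta,
    f_2^1 = sin phi / sin theta, all others 0.  These satisfy
    L_{X_I} h^a = f_I^{hat i} lambda_{hat i}^a_b h^b. *)
Definition fcoef (I i : Idx3) (th ph : R) : R :=
  match I, i with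
  | j1, j1 => cos ph / sin th
  | j2, j1 => sin ph / sin th
  | _, _ => 0
  end.

Definition Lam (I : Idx3) (a b : Idx) (th ph : R) : R :=
  - sum3 (fun i => fcoef I i th ph * lam i a b).

Definition LamF (I : Idx3) (a b : Idx) : Field :=
  fun _ _ th ph => Lam I a b th ph.

(** A connection, given by its components omega_{abc} (all indices down)
    as functions of the coordinates; omega^a_{bc} = eta^{ad} omega_{dbc}. *)
Definition omup (omega : Idx -> Idx -> Idx -> Field) (a b c : Idx) : Field :=
  fun t r th ph => eta a * omega a b c t r th ph.

Definition LieOmega (A1 A2 A3 : R -> R -> R)
  (omega : Idx -> Idx -> Idx -> Field) (I : Idx3) (a b c : Idx)
  (t r th ph : R) : R :=
  sum4 (fun d => Xframe A3 I d t r th ph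
                 * hvec A1 A2 A3 d (omup omega a b c) t r th ph)
  + sum4 (fun d => omup omega d b c t r th ph * Lam I a d th ph
                   - omup omega a d c t r th ph * Lam I d b th ph
                   - omup omega a b d t r th ph * Lam I d c th ph)
  - hvec A1 A2 A3 c (LamF I a b) t r th ph.

Definition spec_omega (A3 W1 W2 W3 W4 W5 W6 W7 W8 : R -> R -> R)
  (a b c : Idx) (t r th ph : R) : R :=
  match a, b, c with
  | i3, i4, i1 => W1 t r   | i4, i3, i1 => - W1 t r
  | i3, i4, i2 => W2 t r   | i4, i3, i2 => - W2 t r
  | i2, i3, i3 => W3 t r   | i3, i2, i3 => - W3 t r
  | i2, i4, i4 => W3 t r   | i4, i2, i4 => - W3 t r
  | i2, i3, i4 => W4 t r   | i3, i2, i4 => - W4 t r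
  | i2, i4, i3 => - W4 t r | i4, i2, i3 => W4 t r
  | i1, i2, i1 => W5 t r   | i2, i1, i1 => - W5 t r
  | i1, i2, i2 => W6 t r   | i2, i1, i2 => - W6 t r
  | i1, i3, i3 => W7 t r   | i3, i1, i3 => - W7 t r
  | i1, i4, i4 => W7 t r   | i4, i1, i4 => - W7 t r
  | i1, i3, i4 => W8 t r   | i3, i1, i4 => - W8 t r
  | i1, i4, i3 => - W8 t r | i4, i1, i3 => W8 t r
  | i3, i4, i4 => - (cos th / (A3 t r * sin th))
  | i4, i3, i4 => cos th / (A3 t r * sin th)
  | _, _, _ => 0
  end.

(* Main.v *)
Require Import Defs.
From Stdlib Require Import Reals Lra.
From Coquelicot Require Import Coquelicot.
Open Scope R_scope.


Definition Mlam (omega : Idx -> Idx -> Idx -> Field) (a b c : Idx) (t r th ph : R) : R :=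
  sum4 (fun d => omup omega d b c t r th ph * lam j1 a d
               - omup omega a d c t r th ph * lam j1 d b
               - omup omega a b d t r th ph * lam j1 d c).

Definition dthf (I : Idx3) (th ph : R) : R :=
  match I with
  | j1 => - (cos ph * cos th) / (sin th * sin th)
  | j2 => - (sin ph * cos th) / (sin th * sin th)
  | j3 => 0 end.
Definition dphf (I : Idx3) (th ph : R) : R :=
  match I with
  | j1 => - sin ph / sin th
  | j2 => cos ph / sin th
  | j3 => 0 end.

Definition hc (A3 : R -> R -> R) (I : Idx3) (a b c : Idx) (t r th ph : R) : R :=
  match c with
  | i3 => / A3 t r * (- lam j1 a b * dthf I th ph)
  | i4 => / (A3 t r * sin th) * (- lam j1 a b * dphf I th ph)
  | _ => 0 end.

Lemma Lam_eq I a b th ph : Lam I a b th ph = - lam j1 a b * fcoef I j1 th ph.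
Proof. unfold Lam, sum3; destruct I; simpl; ring. Qed.

Lemma dthf_ok I th ph : sin th <> 0 ->
  Derive (fun s => fcoef I j1 s ph) th = dthf I th ph.
Proof.
  intro Hs; destruct I; simpl.
  - apply is_derive_unique. auto_derive; [exact Hs|]. field. exact Hs.
  - apply is_derive_unique. auto_derive; [exact Hs|]. field. exact Hs.
  - apply Derive_const.
Qed.

Lemma dphf_ok I th ph : sin th <> 0 ->
  Derive (fun s => fcoef I j1 th s) ph = dphf I th ph.
Proof.
  intro Hs; destruct I; simpl.
  - apply is_derive_unique. auto_derive; [exact I|]. field. exact Hs.
  - apply is_derive_unique. auto_derive; [exact I|]. field. exact Hs.
  - apply Derive_const.
Qed.

Lemma L_a A1 A2 A3 omega I a b c t r th ph :
  A3 t r <> 0 -> sin th <> 0 ->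
  sum4 (fun d => Xframe A3 I d t r th ph * hvec A1 A2 A3 d (omup omega a b c) t r th ph)
  = Xth I th ph * (eta a * Derive (fun s => omega a b c t r s ph) th)
    + Xph I th ph * (eta a * Derive (fun s => omega a b c t r th s) ph).
Proof.
  intros HA Hs. unfold sum4, Xframe, hvec, dpart, omup.
  rewrite !Derive_scal, !Rmult_0_l, !Rplus_0_l. change (Derive (omega a b c t r th) ph) with (Derive (fun s => omega a b c t r th s) ph). field. split; assumption.
Qed.

Lemma L_b omega I a b c t r th ph :
  sum4 (fun d => omup omega d b c t r th ph * Lam I a d th ph
                   - omup omega a d c t r th ph * Lam I d b th ph
                   - omup omega a b d t r th ph * Lam I d c th ph)
  = - fcoef I j1 th ph * Mlam omega a b c t r th ph.
Proof. unfold Mlam, sum4. rewrite !Lam_eq. ring. Qed.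

Lemma L_c A1 A2 A3 I a b c t r th ph :
  sin th <> 0 ->
  hvec A1 A2 A3 c (LamF I a b) t r th ph = hc A3 I a b c t r th ph.
Proof.
  intros Hs. destruct c; unfold hvec, dpart, hc, LamF.
  - rewrite Derive_const; ring.
  - rewrite Derive_const; ring.
  - rewrite (Derive_ext _ (fun s => - lam j1 a b * fcoef I j1 s ph)) by (intro; apply Lam_eq).
    rewrite Derive_scal, dthf_ok by exact Hs. reflexivity.
  - rewrite (Derive_ext _ (fun s => - lam j1 a b * fcoef I j1 th s)) by (intro; apply Lam_eq).
    rewrite Derive_scal, dphf_ok by exact Hs. reflexivity.
Qed.

Lemma decomp A1 A2 A3 omega I a b c t r th ph :
  A3 t r <> 0 -> sin th <> 0 ->
  LieOmega A1 A2 A3 omega I a b c t r th ph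
  = Xth I th ph * (eta a * Derive (fun s => omega a b c t r s ph) th)
    + Xph I th ph * (eta a * Derive (fun s => omega a b c t r th s) ph)
    - fcoef I j1 th ph * Mlam omega a b c t r th ph - hc A3 I a b c t r th ph.
Proof.
  intros HA Hs. unfold LieOmega. rewrite L_a, L_b, L_c by assumption. ring.
Qed.



Definition PW (A3 : R -> R -> R) omega a b c t r th ph : Prop :=
  eta a * Derive (fun s => omega a b c t r th s) ph = 0 /\
  eta a * Derive (fun s => omega a b c t r s ph) th
    = (match c with i4 => lam j1 a b / (A3 t r * (sin th * sin th)) | _ => 0 end) /\
  Mlam omega a b c t r th ph
    = (match c with i3 => - lam j1 a b * cos th / (A3 t r * sin th) | _ => 0 end).

Lemma solve2 (s co D P M k S h1 h2 : R) :
  s * s + co * co = 1 -> S <> 0 -> P = 0 ->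
  s * D + co * k * P - co / S * M - h1 = 0 ->
  - co * D + s * k * P - s / S * M - h2 = 0 ->
  D = s * h1 - co * h2 /\ M = - S * (co * h1 + s * h2).
Proof.
  intros Hsc HS HP E1 E2. subst P.
  assert (E1' : s * D = co / S * M + h1) by lra.
  assert (E2' : co * D = - (s / S * M) - h2) by lra.
  split.
  - transitivity (s * (s * D) + co * (co * D)).
    + transitivity (D * (s * s + co * co)); [rewrite Hsc; ring | ring].
    + rewrite E1', E2'. field. exact HS.
  - assert (HM: M / S = - (co * h1 + s * h2)).
    { assert (M / S = co * (co / S * M) + s * (s / S * M)).
      { transitivity (M / S * (s * s + co * co)); [rewrite Hsc; ring | field; exact HS]. }
      rewrite H.
      replace (co / S * M) with (s * D - h1) by lra.
      replace (s / S * M) with (- (co * D) - h2) by lra. ring. }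
    replace M with (S * (M / S)) by (field; exact HS). rewrite HM. ring.
Qed.

Lemma equiv_point A1 A2 A3 omega a b c t r th ph :
  A3 t r <> 0 -> sin th <> 0 ->
  ((forall I, LieOmega A1 A2 A3 omega I a b c t r th ph = 0) <->
   PW A3 omega a b c t r th ph).
Proof.
  intros HA Hs. unfold PW.
  set (D := Derive (fun s => omega a b c t r s ph) th).
  set (P := Derive (fun s => omega a b c t r th s) ph).
  set (M := Mlam omega a b c t r th ph).
  split.
  - intro HL.
    pose proof (HL j1) as E1. pose proof (HL j2) as E2. pose proof (HL j3) as E3.
    rewrite decomp in E1, E2, E3 by assumption. fold D P M in E1, E2, E3.
    assert (HP : eta a * P = 0).
    { destruct c; simpl in E3; unfold dthf, dphf in E3; lra. }
    rewrite HP in E1, E2. simpl in E1, E2.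
    pose proof (sin2_cos2 ph) as Hsc. unfold Rsqr in Hsc.
    destruct (solve2 (sin ph) (cos ph) (eta a * D) 0 M (cos th / sin th) (sin th)
               (hc A3 j1 a b c t r th ph) (hc A3 j2 a b c t r th ph)) as [HD HM];
      [lra | exact Hs | reflexivity | exact E1 | exact E2 |].
    split; [exact HP|]. rewrite HD, HM.
    destruct c; unfold hc, dthf, dphf; cbv beta iota; split; match goal with |- ?L = ?R => transitivity (R * (sin ph * sin ph + cos ph * cos ph)); [| rewrite Hsc; ring] end; field; try split; try assumption; lra.
  - intros [HP [HD HM]] I. rewrite decomp by assumption. fold D P M.
    rewrite HP, HD, HM. pose proof (sin2_cos2 ph) as Hsc. unfold Rsqr in Hsc.
    destruct I, c; unfold hc, dthf, dphf, Xth, Xph, fcoef; cbv beta iota; field; repeat split; try assumption.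
Qed.



Lemma const_int (g : R -> R) lo hi x y : lo < x < hi -> lo < y < hi ->
  (forall z, lo < z < hi -> ex_derive g z /\ Derive g z = 0) -> g x = g y.
Proof.
  intros Hx Hy Hg.
  destruct (MVT_gen g x y (fun _ => 0)) as [z [Hz Hd]].
  - intros z Hz. destruct (Hg z) as [Hex HD].
    + split; [apply Rlt_le_trans with (Rmin x y) | apply Rle_lt_trans with (Rmax x y)];
        try lra; [apply Rmin_glb_lt | apply Rmax_lub_lt]; lra.
    + rewrite <- HD. apply Derive_correct. exact Hex.
  - intros z Hz. apply continuity_pt_filterlim. apply (ex_derive_continuous (K:=R_AbsRing) (V:=R_NormedModule)).
    apply (Hg z). split; [apply Rlt_le_trans with (Rmin x y) | apply Rle_lt_trans with (Rmax x y)];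
        try lra; [apply Rmin_glb_lt | apply Rmax_lub_lt]; lra.
  - lra.
Qed.

Lemma eta_nz a : eta a <> 0.
Proof. destruct a; simpl; lra. Qed.



Lemma spec_indep A3 W1 W2 W3 W4 W5 W6 W7 W8 a b c t r th s :
  spec_omega A3 W1 W2 W3 W4 W5 W6 W7 W8 a b c t r th s
  = spec_omega A3 W1 W2 W3 W4 W5 W6 W7 W8 a b c t r th 0.
Proof. destruct a, b, c; reflexivity. Qed.

Lemma spec_dth A3 W1 W2 W3 W4 W5 W6 W7 W8 a b c t r th ph :
  A3 t r <> 0 -> sin th <> 0 ->
  eta a * Derive (fun s => spec_omega A3 W1 W2 W3 W4 W5 W6 W7 W8 a b c t r s ph) th
  = match c with i4 => lam j1 a b / (A3 t r * (sin th * sin th)) | _ => 0 end.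
Proof.
  intros HA Hs.
  destruct a, b, c; unfold spec_omega; simpl;
    first [ rewrite Derive_const; unfold Rdiv; ring
          | rewrite Derive_opp, Derive_const; ring
          | idtac ].
  all: rewrite Rmult_1_l; apply is_derive_unique; auto_derive;
    [repeat split; auto | pose proof (sin2_cos2 th) as Hsc; unfold Rsqr in Hsc;
      match goal with |- _ = ?R => transitivity (R * (sin th * sin th + cos th * cos th));
        [field; split; auto | rewrite Hsc; ring] end].
Qed.

Lemma locally_strip (P : R -> Prop) th : 0 < th < PI ->
  (forall y, 0 < y < PI -> P y) -> locally th P.
Proof.
  intros Hth HP.
  assert (He : 0 < Rmin th (PI - th)) by (apply Rmin_glb_lt; lra).
  exists (mkposreal _ He). intros y Hy. apply HP.
  change (Rabs (y - th) < Rmin th (PI - th)) in Hy.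
  apply Rabs_def2 in Hy. pose proof (Rmin_l th (PI - th)). pose proof (Rmin_r th (PI - th)). lra.
Qed.


Theorem mainTheorem6 :
  forall (A1 A2 A3 : R -> R -> R) (omega : Idx -> Idx -> Idx -> Field),
    (forall t r, A1 t r <> 0 /\ A2 t r <> 0 /\ A3 t r <> 0) ->
    (* metric compatibility: omega_{abc} = - omega_{bac} *)
    (forall a b c t r th ph, 0 < th < PI ->
       omega a b c t r th ph = - omega b a c t r th ph) ->
    (* regularity: the components are differentiable in theta and phi *)
    (forall a b c t r th ph, 0 < th < PI ->
       ex_derive (fun s => omega a b c t r s ph) th /\
       ex_derive (fun s => omega a b c t r th s) ph) ->
    ((forall I a b c t r th ph, 0 < th < PI ->
        LieOmega A1 A2 A3 omega I a b c t r th ph = 0)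
     <->
     (exists W1 W2 W3 W4 W5 W6 W7 W8 : R -> R -> R,
        forall a b c t r th ph, 0 < th < PI ->
          omega a b c t r th ph
          = spec_omega A3 W1 W2 W3 W4 W5 W6 W7 W8 a b c t r th ph)).
Proof.
  intros A1 A2 A3 omega HA Hanti Hreg.
  assert (HS : forall th, 0 < th < PI -> sin th <> 0).
  { intros th Hth. apply Rgt_not_eq. apply sin_gt_0; lra. }
  assert (HA3 : forall t r, A3 t r <> 0) by (intros; apply HA).
  split.
  - intros HL.
    assert (HPW : forall a b c t r th ph, 0 < th < PI -> PW A3 omega a b c t r th ph).
    { intros a b c t r th ph Hth. apply (equiv_point A1 A2 A3); auto. }
    assert (Hconst : forall a b c, (match c with i4 => lam j1 a b | _ => 0 end) = 0 ->
              forall t r th ph, 0 < th < PI ->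
              omega a b c t r th ph = omega a b c t r (PI / 2) 0).
    { intros a b c Hl t r th ph Hth. pose proof PI_RGT_0.
      transitivity (omega a b c t r th 0).
      - apply (const_int (fun s => omega a b c t r th s) (Rmin ph 0 - 1) (Rmax ph 0 + 1)).
        + pose proof (Rmin_l ph 0); pose proof (Rmax_l ph 0); lra.
        + pose proof (Rmin_r ph 0); pose proof (Rmax_r ph 0); lra.
        + intros z _. split; [exact (proj2 (Hreg a b c t r th z Hth))|].
          destruct (HPW a b c t r th z Hth) as [HP _].
          apply Rmult_integral in HP. destruct HP as [HP|HP]; [exfalso; exact (eta_nz a HP)| exact HP].
      - apply (const_int (fun s => omega a b c t r s 0) 0 PI); [exact Hth | lra |].
        intros z Hz. split; [exact (proj1 (Hreg a b c t r z 0 Hz))|].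
        destruct (HPW a b c t r z 0 Hz) as [_ [HD _]].
        assert (H0 : (match c with i4 => lam j1 a b / (A3 t r * (sin z * sin z)) | _ => 0 end) = 0).
        { destruct c; try reflexivity. rewrite Hl. unfold Rdiv. ring. }
        rewrite H0 in HD.
        apply Rmult_integral in HD. destruct HD as [HD|HD]; [exfalso; exact (eta_nz a HD)| exact HD]. }
    exists (fun t r => omega i3 i4 i1 t r (PI/2) 0), (fun t r => omega i3 i4 i2 t r (PI/2) 0),
      (fun t r => omega i2 i3 i3 t r (PI/2) 0), (fun t r => omega i2 i3 i4 t r (PI/2) 0),
      (fun t r => omega i1 i2 i1 t r (PI/2) 0), (fun t r => omega i1 i2 i2 t r (PI/2) 0),
      (fun t r => omega i1 i3 i3 t r (PI/2) 0), (fun t r => omega i1 i3 i4 t r (PI/2) 0).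
    intros a b c t r th ph Hth.
    assert (Hb : 0 < PI / 2 < PI) by (pose proof PI_RGT_0; lra).
    pose proof (proj2 (proj2 (HPW i3 i4 i3 t r th ph Hth))) as HM.
    pose proof (Hanti i4 i4 i3 t r th ph Hth).
    pose proof (Hanti i3 i3 i3 t r th ph Hth).
    pose proof (Hanti i4 i3 i4 t r th ph Hth).
    unfold Mlam, sum4, omup, eta, lam in HM; cbv beta iota in HM.
    pose proof (fun a b c => proj2 (proj2 (HPW a b c t r (PI / 2) 0 Hb))) as HMb.
    pose proof (fun a b c => Hanti a b c t r (PI / 2) 0 Hb) as HAb.
pose proof (HMb i1 i1 i1).
pose proof (HMb i1 i1 i2).
pose proof (HMb i1 i1 i3).
pose proof (HMb i1 i1 i4).
pose proof (HMb i1 i2 i1).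
pose proof (HMb i1 i2 i2).
pose proof (HMb i1 i2 i3).
pose proof (HMb i1 i2 i4).
pose proof (HMb i1 i3 i1).
pose proof (HMb i1 i3 i2).
pose proof (HMb i1 i3 i3).
pose proof (HMb i1 i3 i4).
pose proof (HMb i1 i4 i1).
pose proof (HMb i1 i4 i2).
pose proof (HMb i1 i4 i3).
pose proof (HMb i1 i4 i4).
pose proof (HMb i2 i1 i1).
pose proof (HMb i2 i1 i2).
pose proof (HMb i2 i1 i3).
pose proof (HMb i2 i1 i4).
pose proof (HMb i2 i2 i1).
pose proof (HMb i2 i2 i2).
pose proof (HMb i2 i2 i3).
pose proof (HMb i2 i2 i4).
pose proof (HMb i2 i3 i1).
pose proof (HMb i2 i3 i2).
pose proof (HMb i2 i3 i3).
pose proof (HMb i2 i3 i4).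
pose proof (HMb i2 i4 i1).
pose proof (HMb i2 i4 i2).
pose proof (HMb i2 i4 i3).
pose proof (HMb i2 i4 i4).
pose proof (HMb i3 i1 i1).
pose proof (HMb i3 i1 i2).
pose proof (HMb i3 i1 i3).
pose proof (HMb i3 i1 i4).
pose proof (HMb i3 i2 i1).
pose proof (HMb i3 i2 i2).
pose proof (HMb i3 i2 i3).
pose proof (HMb i3 i2 i4).
pose proof (HMb i3 i3 i1).
pose proof (HMb i3 i3 i2).
pose proof (HMb i3 i3 i3).
pose proof (HMb i3 i3 i4).
pose proof (HMb i3 i4 i1).
pose proof (HMb i3 i4 i2).
pose proof (HMb i3 i4 i3).
pose proof (HMb i3 i4 i4).
pose proof (HMb i4 i1 i1).
pose proof (HMb i4 i1 i2).
pose proof (HMb i4 i1 i3).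
pose proof (HMb i4 i1 i4).
pose proof (HMb i4 i2 i1).
pose proof (HMb i4 i2 i2).
pose proof (HMb i4 i2 i3).
pose proof (HMb i4 i2 i4).
pose proof (HMb i4 i3 i1).
pose proof (HMb i4 i3 i2).
pose proof (HMb i4 i3 i3).
pose proof (HMb i4 i3 i4).
pose proof (HMb i4 i4 i1).
pose proof (HMb i4 i4 i2).
pose proof (HMb i4 i4 i3).
pose proof (HMb i4 i4 i4).
pose proof (HAb i1 i1 i1).
pose proof (HAb i1 i1 i2).
pose proof (HAb i1 i1 i3).
pose proof (HAb i1 i1 i4).
pose proof (HAb i1 i2 i1).
pose proof (HAb i1 i2 i2).
pose proof (HAb i1 i2 i3).
pose proof (HAb i1 i2 i4).
pose proof (HAb i1 i3 i1).
pose proof (HAb i1 i3 i2).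
pose proof (HAb i1 i3 i3).
pose proof (HAb i1 i3 i4).
pose proof (HAb i1 i4 i1).
pose proof (HAb i1 i4 i2).
pose proof (HAb i1 i4 i3).
pose proof (HAb i1 i4 i4).
pose proof (HAb i2 i1 i1).
pose proof (HAb i2 i1 i2).
pose proof (HAb i2 i1 i3).
pose proof (HAb i2 i1 i4).
pose proof (HAb i2 i2 i1).
pose proof (HAb i2 i2 i2).
pose proof (HAb i2 i2 i3).
pose proof (HAb i2 i2 i4).
pose proof (HAb i2 i3 i1).
pose proof (HAb i2 i3 i2).
pose proof (HAb i2 i3 i3).
pose proof (HAb i2 i3 i4).
pose proof (HAb i2 i4 i1).
pose proof (HAb i2 i4 i2).
pose proof (HAb i2 i4 i3).
pose proof (HAb i2 i4 i4).
pose proof (HAb i3 i1 i1).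
pose proof (HAb i3 i1 i2).
pose proof (HAb i3 i1 i3).
pose proof (HAb i3 i1 i4).
pose proof (HAb i3 i2 i1).
pose proof (HAb i3 i2 i2).
pose proof (HAb i3 i2 i3).
pose proof (HAb i3 i2 i4).
pose proof (HAb i3 i3 i1).
pose proof (HAb i3 i3 i2).
pose proof (HAb i3 i3 i3).
pose proof (HAb i3 i3 i4).
pose proof (HAb i3 i4 i1).
pose proof (HAb i3 i4 i2).
pose proof (HAb i3 i4 i3).
pose proof (HAb i3 i4 i4).
pose proof (HAb i4 i1 i1).
pose proof (HAb i4 i1 i2).
pose proof (HAb i4 i1 i3).
pose proof (HAb i4 i1 i4).
pose proof (HAb i4 i2 i1).
pose proof (HAb i4 i2 i2).
pose proof (HAb i4 i2 i3).
pose proof (HAb i4 i2 i4).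
pose proof (HAb i4 i3 i1).
pose proof (HAb i4 i3 i2).
pose proof (HAb i4 i3 i3).
pose proof (HAb i4 i3 i4).
pose proof (HAb i4 i4 i1).
pose proof (HAb i4 i4 i2).
pose proof (HAb i4 i4 i3).
pose proof (HAb i4 i4 i4).
    clear HMb HAb HL HPW Hreg Hanti.
    unfold Mlam, sum4, omup, eta, lam in *; cbv beta iota in *.
    destruct a, b, c;
      try (match goal with |- _ ?a ?b ?c _ _ _ _ = _ => rewrite (Hconst a b c (eq_refl _) t r th ph Hth) end); unfold spec_omega; clear Hconst.
    1-64: lra.
  - intros [W1 [W2 [W3 [W4 [W5 [W6 [W7 [W8 Hspec]]]]]]]] I a b c t r th ph Hth.
    revert I. apply (equiv_point A1 A2 A3); auto.
    unfold PW. split; [|split].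
    + rewrite (Derive_ext _ (fun s => spec_omega A3 W1 W2 W3 W4 W5 W6 W7 W8 a b c t r th 0)).
      * rewrite Derive_const; ring.
      * intro s. rewrite <- (spec_indep A3 W1 W2 W3 W4 W5 W6 W7 W8 a b c t r th s).
        apply Hspec; exact Hth.
    + rewrite (Derive_ext_loc _ (fun s => spec_omega A3 W1 W2 W3 W4 W5 W6 W7 W8 a b c t r s ph)).
      * apply spec_dth; auto.
      * apply locally_strip; [exact Hth|]. intros y Hy. apply Hspec; exact Hy.
    + unfold Mlam, sum4, omup. rewrite !(Hspec _ _ _ t r th ph Hth).
      destruct a, b, c; unfold spec_omega; simpl; lra.
Qed.
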